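(* Let $P\in\mathcal{P}$ and $\nu:\mathcal{P}\to\mathcal{H}$. Then $\nu$ is pathwise differentiable at $P$ with local parameter $\dot{\nu}_P=\eta_P$ if both of the following hold: (i) $\eta_P:\dot{\mathcal{P}}_P\to\mathcal{H}$ is bounded and linear, and there exists a set of scores $\mathcal{S}(P)$ whose $L^2(P)$-closure equals $\dot{\mathcal{P}}_P$ such that for every $s\in\mathcal{S}(P)$ there is at least one submodel $\{P_\epsilon:\epsilon\}\in\mathscr{P}(P,\mathcal{P},s)$ with $\|\nu(P_\epsilon)-\nu(P)-\epsilon\,\eta_P(s)\|_{\mathcal{H}}=o(\epsilon)$; and (ii) $\nu$ is locally Lipschitz at $P$: there exist $c,\delta\in(0,\infty)$ such that $\|\nu(P_1)-\nu(P_2)\|_{\mathcal{H}}\le cH(P_1,P_2)$ for all $P_1,P_2\in B_\delta(P)$, where $B_\delta(P)=\{P'\in\mathcal{P}:H(P,P')\le\delta\}$.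
   Context: Let $(\mathcal{Z},\mathbf{B})$ be a Polish space and $\mathcal{P}$ a model of probability distributions on it dominated by a $\sigma$-finite measure $\lambda$. $H(P,P')=[\int(\sqrt{dP}-\sqrt{dP'})^2]^{1/2}$ is the Hellinger distance. For $P\in\mathcal{P}$ and $s\in L^2(P)$, $\mathscr{P}(P,\mathcal{P},s)$ is the set of submodels $\{P_\epsilon:\epsilon\in[0,\delta)\}\subset\mathcal{P}$ with $\|p_\epsilon^{1/2}-p^{1/2}-\epsilon sp^{1/2}/2\|_{L^2(\lambda)}=o(\epsilon)$ as $\epsilon\to0$ ($p_\epsilon,p$ the $\lambda$-densities). The tangent set at $P$ is $\{s:\mathscr{P}(P,\mathcal{P},s)\neq\emptyset\}$ and the tangent space $\dot{\mathcal{P}}_P$ its closed linear span in $L^2(P)$. $\mathcal{H}$ is a real separable Hilbert space. $\nu$ is pathwise differentiable at $P$ with local parameter $\dot{\nu}_P$ if $\dot{\nu}_P:\dot{\mathcal{P}}_P\to\mathcal{H}$ is continuous linear and $\|\nu(P_\epsilon)-\nu(P)-\epsilon\dot{\nu}_P(s)\|_{\mathcal{H}}=o(\epsilon)$ for every $s$ in the tangent set and every submodel in $\mathscr{P}(P,\mathcal{P},s)$. *)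

(* Defs.v *)
From mathcomp Require Import all_boot all_order all_algebra.
From mathcomp Require Import all_classical all_reals all_analysis.
Import Order.TTheory GRing.Theory Num.Theory numFieldNormedType.Exports.
Set Implicit Arguments. Unset Strict Implicit. Unset Printing Implicit Defensive.
Local Open Scope classical_set_scope.
Local Open Scope ring_scope.

Section Defs.
Context {R : realType} {d : measure_display} {Z : measurableType d}.
Variable lam : {measure set Z -> \bar R}.

Definition is_density (p : Z -> R) : Prop :=
  [/\ measurable_fun setT p, (forall x, 0 <= p x) & (\int[lam]_x (p x)%:E = 1)%E].

Definition sqnormL (f : Z -> R) : \bar R := (\int[lam]_x ((f x ^+ 2)%:E))%E.

(* squared L^2(P) norm, P having lambda-density p: int f^2 dP = int f^2 p dlambda *)
Definition sqnormP (p f : Z -> R) : \bar R := (\int[lam]_x ((f x ^+ 2 * p x)%:E))%E.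

Definition inL2P (p f : Z -> R) : Prop :=
  measurable_fun setT f /\ (sqnormP p f < +oo)%E.

Definition hellinger (p1 p2 : Z -> R) : R :=
  Num.sqrt (fine (sqnormL (fun x => Num.sqrt (p1 x) - Num.sqrt (p2 x)))).

(* the set of submodels scrP(P, M, s): families eps |-> q eps, eps in [0,delta),
   inside M, differentiable in quadratic mean with score s *)
Definition submodels (M : set (Z -> R)) (p s : Z -> R) : set (R -> Z -> R) :=
  [set q : R -> Z -> R | exists delta : R, 0 < delta /\
     (forall eps, 0 <= eps < delta -> M (q eps)) /\
     (forall e : R, 0 < e -> \forall eps \near 0^'+,
        (sqnormL (fun x => (Num.sqrt (q eps x) - Num.sqrt (p x)
                           - eps * s x * Num.sqrt (p x) / 2)%R)
          <= ((e * eps) ^+ 2)%:E)%E)].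

Definition tangent_set (M : set (Z -> R)) (p : Z -> R) : set (Z -> R) :=
  [set s | inL2P p s /\ submodels M p s !=set0].

Definition lin_span (A : set (Z -> R)) : set (Z -> R) :=
  [set f | exists n (c : 'I_n -> R) (g : 'I_n -> Z -> R),
     (forall i, A (g i)) /\ f = (fun x => \sum_(i < n) c i * g i x)].

(* closure in L^2(P) (as a set of representatives) *)
Definition L2P_closure (p : Z -> R) (A : set (Z -> R)) : set (Z -> R) :=
  [set f | inL2P p f /\ forall e : R, 0 < e ->
     exists2 t, A t & (sqnormP p (fun x => (f x - t x)%R) < (e ^+ 2)%:E)%E].

Definition tangent_space (M : set (Z -> R)) (p : Z -> R) : set (Z -> R) :=
  L2P_closure p (lin_span (tangent_set M p)).

Context {H : normedModType R}.

Definition lin_on (A : set (Z -> R)) (eta : (Z -> R) -> H) : Prop :=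
  forall f g (a b : R), A f -> A g ->
    eta (fun x => a * f x + b * g x) = a *: eta f + b *: eta g.

Definition cont_on (p : Z -> R) (A : set (Z -> R)) (eta : (Z -> R) -> H) : Prop :=
  forall f, A f -> forall e : R, 0 < e -> exists2 dl : R, 0 < dl &
    forall g, A g -> (sqnormP p (fun x => (g x - f x)%R) < (dl ^+ 2)%:E)%E ->
      `|eta g - eta f| < e.

Definition bounded_on (p : Z -> R) (A : set (Z -> R)) (eta : (Z -> R) -> H) : Prop :=
  exists C : R, forall f, A f ->
    ((`|eta f| ^+ 2)%:E <= (C ^+ 2)%:E * sqnormP p f)%E.

Definition pathwise_differentiable (M : set (Z -> R)) (nu : (Z -> R) -> H)
    (p : Z -> R) (eta : (Z -> R) -> H) : Prop :=
  [/\ lin_on (tangent_space M p) eta, cont_on p (tangent_space M p) eta &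
      forall s, tangent_set M p s -> forall q, submodels M p s q ->
        forall e : R, 0 < e -> \forall eps \near 0^'+,
          `|nu (q eps) - nu p - eps *: eta s| <= e * eps].

End Defs.

Definition real_separable_hilbert {R : realType} (H : normedModType R) : Prop :=
  [/\ exists ip : H -> H -> R,
        (forall x y, ip x y = ip y x) /\
        (forall (a : R) x y z, ip (a *: x + y) z = a * ip x z + ip y z) /\
        (forall x, `|x| = Num.sqrt (ip x x)),
      (forall u : nat -> H,
         (forall e : R, 0 < e -> exists N, forall m n, (N <= m)%N -> (N <= n)%N ->
            `|u m - u n| < e) ->
         exists l : H, forall e : R, 0 < e -> exists N, forall n, (N <= n)%N ->
            `|u n - l| < e) &
      exists u : nat -> H, forall (x : H) (e : R), 0 < e -> exists n, `|x - u n| < e].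

(* Main.v *)
Require Import Defs.
From mathcomp Require Import all_boot all_order all_algebra.
From mathcomp Require Import all_classical all_reals all_analysis.
From mathcomp Require Import ring lra measurable_realfun.
Import Order.TTheory GRing.Theory Num.Theory numFieldNormedType.Exports.
Local Open Scope classical_set_scope.
Local Open Scope ring_scope.

Section Helpers.
Context {R : realType} {d : measure_display} {Z : measurableType d}.
Variable lam : {measure set Z -> \bar R}.
Implicit Types f g : Z -> R.

Lemma mD f g : measurable_fun setT f -> measurable_fun setT g ->
  measurable_fun setT (fun x => f x + g x).
Proof. exact: measurable_funD. Qed.
Lemma mB f g : measurable_fun setT f -> measurable_fun setT g ->
  measurable_fun setT (fun x => f x - g x).
Proof. exact: measurable_funB. Qed.
Lemma mM f g : measurable_fun setT f -> measurable_fun setT g ->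
  measurable_fun setT (fun x => f x * g x).
Proof. exact: measurable_funM. Qed.
Lemma mX f n : measurable_fun setT f -> measurable_fun setT (fun x => f x ^+ n).
Proof. exact: measurable_funX. Qed.
Lemma mS f : measurable_fun setT f -> measurable_fun setT (fun x => Num.sqrt (f x)).
Proof.
move=> mf; apply: (@measurableT_comp _ _ _ _ _ _ (@Num.sqrt R) _ f) => //.
apply: continuous_measurable_fun; exact: sqrt_continuous.
Qed.
Lemma mC (c : R) : measurable_fun setT (fun _ : Z => c).
Proof. exact: measurable_cst. Qed.

Lemma mE f : measurable_fun setT f ->
  measurable_fun setT (EFin \o f).
Proof. by move=> mf; apply/measurable_EFinP. Qed.

Ltac mtac := repeat first [assumption | apply: mC | apply: mS | apply: mX
   | apply: mM | apply: mB | apply: mD].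

Lemma int_le3 f g1 g2 g3 (a1 a2 a3 : R) :
  measurable_fun setT f -> measurable_fun setT g1 -> measurable_fun setT g2 ->
  measurable_fun setT g3 ->
  (forall x, 0 <= f x) -> (forall x, 0 <= g1 x) -> (forall x, 0 <= g2 x) ->
  (forall x, 0 <= g3 x) -> 0 <= a1 -> 0 <= a2 -> 0 <= a3 ->
  (forall x, f x <= a1 * g1 x + a2 * g2 x + a3 * g3 x) ->
  (\int[lam]_x (f x)%:E <= a1%:E * \int[lam]_x (g1 x)%:E
     + a2%:E * \int[lam]_x (g2 x)%:E + a3%:E * \int[lam]_x (g3 x)%:E)%E.
Proof.
move=> mf m1 m2 m3 f0 h1 h2 h3 a10 a20 a30 hle.
apply: (@le_trans _ _ (\int[lam]_x ((a1 * g1 x)%:E + (a2 * g2 x)%:E + (a3 * g3 x)%:E))%E).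
  apply: ge0_le_integral => //.
  - by move=> x _; rewrite lee_fin.
  - by apply: mE.
  - apply: emeasurable_funD; first apply: emeasurable_funD; apply: mE; mtac.
  - by move=> x _; rewrite -!EFinD lee_fin.
rewrite ge0_integralD //; last 4 first.
- by move=> x _; rewrite -EFinD lee_fin addr_ge0 // mulr_ge0.
- apply: emeasurable_funD; apply: mE; mtac.
- by move=> x _; rewrite lee_fin mulr_ge0.
- apply: mE; mtac.
rewrite ge0_integralD //; last 4 first.
- by move=> x _; rewrite lee_fin mulr_ge0.
- apply: mE; mtac.
- by move=> x _; rewrite lee_fin mulr_ge0.
- apply: mE; mtac.
have hZ : forall (a : R) (g : Z -> R), 0 <= a -> measurable_fun setT g ->
    (forall x, 0 <= g x) ->
    (\int[lam]_x (a * g x)%:E = a%:E * \int[lam]_x (g x)%:E)%E.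
  move=> a g a0 mg g0; under eq_integral do rewrite EFinM.
  by rewrite ge0_integralZl_EFin //; [move=> x _; rewrite lee_fin | apply: mE].
by rewrite !hZ.
Qed.

End Helpers.

Section Span.
Context {R : realType} {d : measure_display} {Z : measurableType d}.
Variable lam : {measure set Z -> \bar R}.

Lemma lin_span_sub (A : set (Z -> R)) f g : lin_span A f -> lin_span A g ->
  lin_span A (fun x => f x - g x).
Proof.
move=> [n [c [h [hA ->]]]] [m [c' [h' [hA' ->]]]].
exists (n + m)%N.
exists (fun i => match fintype.split i with inl j => c j | inr j => - c' j end).
exists (fun i => match fintype.split i with inl j => h j | inr j => h' j end).
split.
  by move=> i; case: (fintype.split i).
apply/funext => x; rewrite big_split_ord /=.
have e1 : forall i : 'I_n, fintype.split (lshift m i) = inl i := fun i => unsplitK (inl i).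
have e2 : forall i : 'I_m, fintype.split (rshift n i) = inr i := fun i => unsplitK (inr i).
rewrite -sumrN; congr (_ + _); apply: eq_bigr => i _.
  by rewrite e1.
by rewrite e2 mulNr.
Qed.

Lemma lin_span_self (A : set (Z -> R)) f : A f -> lin_span A f.
Proof.
move=> Af; exists 1%N, (fun _ => 1), (fun _ => f); split => //.
by apply/funext => x; rewrite big_ord1 mul1r.
Qed.

Lemma lin_span_meas (A : set (Z -> R)) f :
  (forall g, A g -> measurable_fun setT g) -> lin_span A f -> measurable_fun setT f.
Proof.
move=> hm [n [c [h [hA ->]]]].
apply: measurable_sum => i; apply: mM; [exact: mC | exact: hm].
Qed.

End Span.

Section L2.
Context {R : realType} {d : measure_display} {Z : measurableType d}.
Variable lam : {measure set Z -> \bar R}.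
Variable p : Z -> R.
Hypothesis p0 : forall x, 0 <= p x.
Hypothesis mp : measurable_fun setT p.
Implicit Types f g u v s : Z -> R.

Ltac mtac := repeat first [assumption | apply: mC | apply: mS | apply: mX
   | apply: mM | apply: mB | apply: mD].

Lemma N_ge0 f : (0 <= sqnormP lam p f)%E.
Proof. by apply: integral_ge0 => x _; rewrite lee_fin mulr_ge0 // sqr_ge0. Qed.

Lemma L_ge0 f : (0 <= sqnormL lam f)%E.
Proof. by apply: integral_ge0 => x _; rewrite lee_fin sqr_ge0. Qed.

Lemma fin_of (x : \bar R) (b : R) : (0 <= x)%E -> (x <= b%:E)%E ->
  x = (fine x)%:E /\ 0 <= fine x <= b.
Proof.
move=> x0 xb; have xf : x \is a fin_num.
  by rewrite ge0_fin_numE // (le_lt_trans xb) // ltry.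
split; first by rewrite fineK.
by rewrite -lee_fin -(lee_fin _ b) fineK // x0 xb.
Qed.

Lemma fin_of_lt (x : \bar R) : (0 <= x)%E -> (x < +oo)%E ->
  x = (fine x)%:E /\ 0 <= fine x.
Proof.
move=> x0 xb; have xf : x \is a fin_num by rewrite ge0_fin_numE.
by split; [rewrite fineK | rewrite -lee_fin fineK].
Qed.

Lemma N2 u v : measurable_fun setT u -> measurable_fun setT v ->
  (sqnormP lam p (fun x => (u x - v x)%R) <=
     2%:E * sqnormP lam p u + 2%:E * sqnormP lam p v)%E.
Proof.
move=> mu mv.
have := @int_le3 R d Z lam (fun x => (u x - v x) ^+ 2 * p x) (fun x => u x ^+ 2 * p x)
  (fun x => v x ^+ 2 * p x) (fun _ => 0) 2 2 0.
rewrite mul0e adde0; apply.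
- mtac.
- mtac.
- mtac.
- exact: mC.
- by move=> x; rewrite mulr_ge0 // sqr_ge0.
- by move=> x; rewrite mulr_ge0 // sqr_ge0.
- by move=> x; rewrite mulr_ge0 // sqr_ge0.
- by [].
- by [].
- by [].
- by [].
- move=> x; have := p0 x; have := mulr_ge0 (p0 x) (sqr_ge0 (u x + v x)).
  move=> h1 h2; rewrite mul0r addr0; nra.
Qed.

Lemma N_eq f g : (forall x, f x = g x) -> sqnormP lam p f = sqnormP lam p g.
Proof. by move=> fg; rewrite /sqnormP; apply: eq_integral => x _; rewrite fg. Qed.

Lemma N_sym f g : sqnormP lam p (fun x => f x - g x) = sqnormP lam p (fun x => g x - f x).
Proof.
rewrite /sqnormP; apply: eq_integral => x _.
by rewrite -opprB sqrrN.
Qed.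

Variable M : set (Z -> R).

Lemma tset_meas g : tangent_set lam M p g -> measurable_fun setT g.
Proof. by move=> [[]]. Qed.

Lemma tset_T s : tangent_set lam M p s -> tangent_space lam M p s.
Proof.
move=> ts; split; first by case: ts.
move=> e e0; exists s; first exact: lin_span_self.
rewrite /sqnormP (eq_integral (fun _ => 0%E)); last first.
  by move=> x _; rewrite subrr expr0n /= mul0r.
by rewrite integral0 lte_fin exprn_gt0.
Qed.

Lemma T_sub f g : tangent_space lam M p f -> tangent_space lam M p g ->
  tangent_space lam M p (fun x => 1 * f x + (-1) * g x).
Proof.
have -> : (fun x => 1 * f x + (-1) * g x) = (fun x => f x - g x).
  by apply/funext => x; rewrite mul1r mulN1r.
move=> [[mf Nf] af] [[mg Ng] ag].
have [Nf1 Nf2] := fin_of_lt _ (N_ge0 f) Nf.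
have [Ng1 Ng2] := fin_of_lt _ (N_ge0 g) Ng.
split.
  split; first by mtac.
  have h := N2 _ _ mf mg. apply: le_lt_trans h _.
  by rewrite Nf1 Ng1 -!EFinM -EFinD ltry.
move=> e e0.
have e20 : 0 < e / 2 by rewrite divr_gt0.
have [t1 t1s Nt1] := af _ e20.
have [t2 t2s Nt2] := ag _ e20.
exists (fun x => t1 x - t2 x); first exact: lin_span_sub.
have mt1 := lin_span_meas _ _ tset_meas t1s.
have mt2 := lin_span_meas _ _ tset_meas t2s.
rewrite (N_eq _ (fun x => (f x - t1 x) - (g x - t2 x))); last first.
  by move=> x; ring.
apply: (le_lt_trans (N2 _ _ _ _)); [by mtac | by mtac |].
have [a1 a10] := fin_of_lt _ (N_ge0 _) (lt_trans Nt1 (ltry _)).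
have [a2 a20] := fin_of_lt _ (N_ge0 _) (lt_trans Nt2 (ltry _)).
move: Nt1 Nt2; rewrite a1 a2 -!EFinM -EFinD !lte_fin => h1 h2.
have -> : e ^+ 2 = 2 * (e / 2) ^+ 2 + 2 * (e / 2) ^+ 2 by field.
by apply: ltrD; rewrite ltr_pM2l.
Qed.

End L2.

Lemma sq3 {R : realType} (a b c : R) : (a + b + c) ^+ 2 <= 3 * a ^+ 2 + 3 * b ^+ 2 + 3 * c ^+ 2.
Proof. have := sqr_ge0 (a - b); have := sqr_ge0 (b - c); have := sqr_ge0 (a - c); nra. Qed.

Lemma sq2 {R : realType} (a b : R) : (a + b) ^+ 2 <= 2 * a ^+ 2 + 2 * b ^+ 2.
Proof. have := sqr_ge0 (a - b); nra. Qed.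

Lemma pt3 {R : realType} (Q1 Q2 P S1 S2 e : R) : (Q1 - Q2) ^+ 2 <=
  3 * (Q1 - P - e * S1 * P / 2) ^+ 2 + 3 * (Q2 - P - e * S2 * P / 2) ^+ 2
  + 3 * e ^+ 2 / 4 * ((S1 - S2) ^+ 2 * P ^+ 2).
Proof.
have -> : Q1 - Q2 = (Q1 - P - e * S1 * P / 2) + (- (Q2 - P - e * S2 * P / 2))
   + e * (S1 - S2) * P / 2 by ring.
apply: le_trans (sq3 _ _ _) _.
by rewrite sqrrN; rewrite le_eqVlt; apply/orP; left; apply/eqP; field.
Qed.

Lemma pt2 {R : realType} (Q P S e : R) : (P - Q) ^+ 2 <=
  2 * (Q - P - e * S * P / 2) ^+ 2 + e ^+ 2 / 2 * (S ^+ 2 * P ^+ 2) + 0 * 0.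
Proof.
have -> : P - Q = - (Q - P - e * S * P / 2) + (- (e * S * P / 2)) by ring.
apply: le_trans (sq2 _ _) _.
by rewrite !sqrrN; rewrite le_eqVlt; apply/orP; left; apply/eqP; field.
Qed.

Section Hell.
Context {R : realType} {d : measure_display} {Z : measurableType d}.
Variable lam : {measure set Z -> \bar R}.
Variable p : Z -> R.
Hypothesis p0 : forall x, 0 <= p x.
Hypothesis mp : measurable_fun setT p.
Implicit Types f g u v s : Z -> R.

Ltac mtac := repeat first [assumption | apply: mC | apply: mS | apply: mX
   | apply: mM | apply: mB | apply: mD].

Lemma hell_le (p1 p2 : Z -> R) (B : R) :
  (sqnormL lam (fun x => (Num.sqrt (p1 x) - Num.sqrt (p2 x))%R) <= B%:E)%E ->
  hellinger lam p1 p2 <= Num.sqrt B.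
Proof.
move=> h; have [_ /andP[h0 hb]] := fin_of _ _ (L_ge0 _ _) h.
rewrite /hellinger ler_sqrt //; exact: le_trans hb.
Qed.

Lemma hell_diff (q1 q2 s1 s2 : Z -> R) (eps a : R) :
  measurable_fun setT q1 -> measurable_fun setT q2 ->
  measurable_fun setT s1 -> measurable_fun setT s2 ->
  0 <= eps -> 0 <= a ->
  (sqnormL lam (fun x => (Num.sqrt (q1 x) - Num.sqrt (p x)
        - eps * s1 x * Num.sqrt (p x) / 2)%R) <= ((a * eps) ^+ 2)%:E)%E ->
  (sqnormL lam (fun x => (Num.sqrt (q2 x) - Num.sqrt (p x)
        - eps * s2 x * Num.sqrt (p x) / 2)%R) <= ((a * eps) ^+ 2)%:E)%E ->
  (sqnormP lam p (fun x => (s1 x - s2 x)%R) <= (a ^+ 2)%:E)%E ->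
  hellinger lam q1 q2 <= 3 * a * eps.
Proof.
move=> mq1 mq2 ms1 ms2 e0 a0 h1 h2 h3.
apply: (@le_trans _ _ (Num.sqrt ((3 * a * eps) ^+ 2))); last first.
  by rewrite sqrtr_sqr ger0_norm // mulr_ge0 // mulr_ge0.
apply: hell_le.
have := @int_le3 R d Z lam
  (fun x => (Num.sqrt (q1 x) - Num.sqrt (q2 x)) ^+ 2)
  (fun x => (Num.sqrt (q1 x) - Num.sqrt (p x) - eps * s1 x * Num.sqrt (p x) / 2) ^+ 2)
  (fun x => (Num.sqrt (q2 x) - Num.sqrt (p x) - eps * s2 x * Num.sqrt (p x) / 2) ^+ 2)
  (fun x => (s1 x - s2 x) ^+ 2 * p x) 3 3 (3 * eps ^+ 2 / 4).
have sq0 : forall y : R, 0 <= y ^+ 2 := fun y => sqr_ge0 y.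
have a30 : 0 <= 3 * eps ^+ 2 / 4 by rewrite mulr_ge0 // mulr_ge0 // sqr_ge0.
move=> /(_ ltac:(mtac) ltac:(mtac) ltac:(mtac) ltac:(mtac)).
move=> /(_ (fun x => sq0 _) (fun x => sq0 _) (fun x => sq0 _)).
move=> /(_ (fun x => mulr_ge0 (sq0 _) (p0 x))).
move=> /(_ (ler0n _ 3) (ler0n _ 3) a30) h.
have {h} h := h (fun x => ltac:(move: (sqr_sqrtr (p0 x)) => hp;
   move: (Num.sqrt (p x)) hp => sp hp; rewrite -hp; exact: pt3)).
have [E1 /andP[l10 l1b]] := fin_of _ _ (L_ge0 _ _) h1.
have [E2 /andP[l20 l2b]] := fin_of _ _ (L_ge0 _ _) h2.
have [E3 /andP[n0 nb]] := fin_of _ _ (N_ge0 _ _ p0 _) h3.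
rewrite /sqnormL /sqnormP /= in E1 E2 E3.
rewrite E1 E2 E3 -!EFinM -!EFinD in h.
apply: le_trans h _; rewrite lee_fin.
set l1 := fine _ in l10 l1b *; set l2 := fine _ in l20 l2b *; set n := fine _ in n0 nb *.
have e2 := sq0 eps.
have : eps ^+ 2 * n <= eps ^+ 2 * a ^+ 2 by rewrite ler_wpM2l.
nra.
Qed.

Lemma hell_p (M : set (Z -> R)) s q (dl : R) :
  (forall r, M r -> is_density lam r) -> inL2P lam p s ->
  submodels lam M p s q -> 0 < dl ->
  \forall eps \near 0^'+, hellinger lam p (q eps) <= dl.
Proof.
move=> hM [ms Ns] [dq [dq0 [qM qd]]] dl0.
have [En n0] := fin_of_lt _ (N_ge0 _ _ p0 s) Ns.
set n := fine (sqnormP lam p s) in En n0.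
have n2 : 0 < 2 + n by lra.
have k0 : 0 < dl ^+ 2 / (2 + n) by rewrite divr_gt0 // exprn_gt0.
near=> eps.
have e0 : 0 < eps by near: eps; exact: nbhs_right_gt.
have edq : eps < dq by near: eps; exact: nbhs_right_lt.
have e1 : eps < 1 by near: eps; exact: nbhs_right_lt ltr01.
have ek : eps < dl ^+ 2 / (2 + n) by near: eps; exact: nbhs_right_lt k0.
have hr : (sqnormL lam (fun x => (Num.sqrt (q eps x) - Num.sqrt (p x)
     - eps * s x * Num.sqrt (p x) / 2)%R) <= ((1 * eps) ^+ 2)%:E)%E.
  by near: eps; exact: (qd 1 ltr01).
have [mq _ _] := hM _ (qM eps ltac:(by rewrite (ltW e0) edq)).
apply: (@le_trans _ _ (Num.sqrt (dl ^+ 2))); last first.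
  by rewrite sqrtr_sqr ger0_norm // ltW.
apply: hell_le.
have sq0 : forall y : R, 0 <= y ^+ 2 := fun y => sqr_ge0 y.
have := @int_le3 R d Z lam
  (fun x => (Num.sqrt (p x) - Num.sqrt (q eps x)) ^+ 2)
  (fun x => (Num.sqrt (q eps x) - Num.sqrt (p x) - eps * s x * Num.sqrt (p x) / 2) ^+ 2)
  (fun x => s x ^+ 2 * p x) (fun _ => 0) 2 (eps ^+ 2 / 2) 0.
move=> /(_ ltac:(mtac) ltac:(mtac) ltac:(mtac) ltac:(mtac)).
move=> /(_ (fun x => sq0 _) (fun x => sq0 _) (fun x => mulr_ge0 (sq0 _) (p0 x))).
move=> /(_ (fun x => lexx 0) (ler0n _ 2)).
move=> /(_ ltac:(by rewrite mulr_ge0 // invr_ge0) (lexx 0)) h.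
have {h} h := h (fun x => ltac:(move: (sqr_sqrtr (p0 x)) => hp;
   move: (Num.sqrt (p x)) hp => sp hp; rewrite -hp; exact: pt2)).
have [E1 /andP[l10 l1b]] := fin_of _ _ (L_ge0 _ _) hr.
rewrite /sqnormL /sqnormP /= in E1 En.
rewrite mul0e adde0 E1 En -!EFinM -!EFinD in h.
apply: le_trans h _; rewrite lee_fin.
set l1 := fine _ in l10 l1b *.
rewrite ltr_pdivlMr // in ek.
have : eps ^+ 2 <= eps by rewrite expr2 ger_pMr // ltW.
nra.
Unshelve. all: by end_near.
Qed.

End Hell.

Lemma N_self {R : realType} {d : measure_display} {Z : measurableType d}
  (lam : {measure set Z -> \bar R}) (p f : Z -> R) :
  sqnormP lam p (fun x => (f x - f x)%R) = 0%E.
Proof.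
rewrite /sqnormP (eq_integral (fun _ => 0%E)); last first.
  by move=> x _; rewrite subrr expr0n /= mul0r.
by rewrite integral0.
Qed.

Theorem lemma2 (R : realType) (d : measure_display) (Z : measurableType d)
    (lam : {measure set Z -> \bar R}) (H : normedModType R)
    (M : set (Z -> R)) (p : Z -> R) (nu : (Z -> R) -> H) (eta : (Z -> R) -> H) :
  sigma_finite setT lam ->
  real_separable_hilbert H ->
  (forall q, M q -> is_density lam q) ->
  M p ->
  (* (i) *)
  (lin_on (tangent_space lam M p) eta /\ bounded_on lam p (tangent_space lam M p) eta /\
   exists S : set (Z -> R),
     [/\ S `<=` inL2P lam p,
         L2P_closure lam p S = tangent_space lam M p &
         forall s, S s -> exists2 q, submodels lam M p s q &
           forall e : R, 0 < e -> \forall eps \near 0^'+,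
             `|nu (q eps) - nu p - eps *: eta s| <= e * eps]) ->
  (* (ii) *)
  (exists c delta : R, [/\ 0 < c, 0 < delta &
     forall p1 p2, M p1 -> M p2 -> hellinger lam p p1 <= delta ->
       hellinger lam p p2 <= delta -> `|nu p1 - nu p2| <= c * hellinger lam p1 p2]) ->
  pathwise_differentiable lam M nu p eta.
Proof.
move=> _ _ hM Mp [lin [[C bnd] [S [SL2 SclT Ss]]]] [c [dl [c0 dl0 lip]]].
have [mp p0 _] := hM _ Mp.
have Cn0 : 0 < `|C| + 1 by rewrite ltr_pwDr // normr_ge0.
have etab : forall h, tangent_space lam M p h -> forall a : R, 0 < a ->
    (sqnormP lam p h < (a ^+ 2)%:E)%E -> `|eta h| < (`|C| + 1) * a.
  move=> h Th a a0 hN.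
  have [En n0] := fin_of_lt _ (N_ge0 _ _ p0 h) (lt_trans hN (ltry _)).
  set n := fine (sqnormP lam p h) in En n0.
  have := bnd h Th; rewrite En -EFinM lee_fin => hb.
  move: hN; rewrite En lte_fin => hn.
  have hC : C ^+ 2 = `|C| ^+ 2 by rewrite real_normK // num_real.
  rewrite hC in hb.
  have h1 : `|C| ^+ 2 * n <= `|C| ^+ 2 * a ^+ 2 by rewrite ler_wpM2l // ?sqr_ge0 // ltW.
  have h2 : `|C| ^+ 2 * a ^+ 2 < ((`|C| + 1) * a) ^+ 2.
    rewrite exprMn ltr_pM2r ?exprn_gt0 //.
    have := normr_ge0 C; nra.
  have h3 : `|eta h| ^+ 2 < ((`|C| + 1) * a) ^+ 2 by lra.
  have := normr_ge0 (eta h); have : 0 < (`|C| + 1) * a by rewrite mulr_gt0.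
  nra.
split.
- exact: lin.
- move=> f Tf e e0.
  exists (e / (`|C| + 1)); first by rewrite divr_gt0.
  move=> g Tg hN.
  have Th := T_sub _ _ p0 mp _ _ _ Tg Tf.
  have := lin g f 1 (-1) Tg Tf; rewrite scale1r scaleN1r => <-.
  have -> : e = (`|C| + 1) * (e / (`|C| + 1)) by field; rewrite gt_eqF.
  apply: etab => //; first by rewrite divr_gt0.
  by rewrite (N_eq _ _ _ (fun x => g x - f x)) // => x; rewrite mul1r mulN1r.
move=> s ts q qs e e0.
have Ts := tset_T _ _ _ _ ts.
have [[ms Ns] _] := ts.
set K := 3 * c + `|C| + 2.
have K0 : 0 < K by rewrite /K; have := normr_ge0 C; lra.
set r := e / K.
have r0 : 0 < r by rewrite divr_gt0.
have Ts' := Ts; rewrite -SclT in Ts'.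
have [_ /(_ r r0) [s' Ss' Nss']] := Ts'.
have [q' qs' hq'] := Ss _ Ss'.
have [ms' Ns'] := SL2 _ Ss'.
have ST : tangent_space lam M p s'.
  rewrite -SclT; split; first exact: SL2.
  by move=> e' e'0; exists s' => //; rewrite N_self lte_fin exprn_gt0.
have Dh := T_sub _ _ p0 mp _ _ _ ST Ts.
have hD : `|eta s' - eta s| < (`|C| + 1) * r.
  have := lin s' s 1 (-1) ST Ts; rewrite scale1r scaleN1r => <-.
  apply: etab => //.
  rewrite (N_eq _ _ _ (fun x => s' x - s x)); last by move=> x; rewrite mul1r mulN1r.
  by rewrite N_sym.
have hp1 := hell_p _ _ p0 mp _ _ _ _ hM (conj ms Ns) qs dl0.
have hp2 := hell_p _ _ p0 mp _ _ _ _ hM (conj ms' Ns') qs' dl0.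
have [dq [dq0 [qM qd]]] := qs.
have [dq' [dq'0 [qM' qd']]] := qs'.
near=> eps.
have ep0 : 0 < eps by near: eps; exact: nbhs_right_gt.
have edq : eps < dq by near: eps; exact: nbhs_right_lt.
have edq' : eps < dq' by near: eps; exact: nbhs_right_lt.
have r1 : (sqnormL lam (fun x => (Num.sqrt (q eps x) - Num.sqrt (p x)
     - eps * s x * Num.sqrt (p x) / 2)%R) <= ((r * eps) ^+ 2)%:E)%E.
  by near: eps; exact: (qd r r0).
have r2 : (sqnormL lam (fun x => (Num.sqrt (q' eps x) - Num.sqrt (p x)
     - eps * s' x * Num.sqrt (p x) / 2)%R) <= ((r * eps) ^+ 2)%:E)%E.
  by near: eps; exact: (qd' r r0).
have H1 : hellinger lam p (q eps) <= dl by near: eps; exact: hp1.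
have H2 : hellinger lam p (q' eps) <= dl by near: eps; exact: hp2.
have B2 : `|nu (q' eps) - nu p - eps *: eta s'| <= r * eps by near: eps; exact: hq'.
have Mq := qM eps ltac:(by rewrite (ltW ep0) edq).
have Mq' := qM' eps ltac:(by rewrite (ltW ep0) edq').
have [mq _ _] := hM _ Mq.
have [mq' _ _] := hM _ Mq'.
have Hd := hell_diff _ _ p0 mp _ _ _ _ _ _ mq mq' ms ms' (ltW ep0) (ltW r0) r1 r2 (ltW Nss').
have L := lip _ _ Mq Mq' H1 H2.
have -> : nu (q eps) - nu p - eps *: eta s =
   (nu (q eps) - nu (q' eps)) + (nu (q' eps) - nu p - eps *: eta s')
   + eps *: (eta s' - eta s).
  by rewrite scalerBr !addrA subrK subrK.
apply: le_trans (ler_normD _ _) _.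
apply: le_trans (lerD (ler_normD _ _) (lexx _)) _.
rewrite normrZ ger0_norm ?(ltW ep0) //.
have L' : `|nu (q eps) - nu (q' eps)| <= c * (3 * r * eps).
  by apply: le_trans L _; rewrite ler_wpM2l // ltW.
have hDe : eps * `|eta s' - eta s| <= eps * ((`|C| + 1) * r).
  by rewrite ler_wpM2l // ltW.
have eK : e = r * K by rewrite /r mulrC mulrA [K * e]mulrC mulfK // gt_eqF.
rewrite eK /K.
nra.
Unshelve. all: by end_near.
Qed.
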